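(* Let $n\ge 1$, $d=2$, and for every $i\in[n]$ let $f_i(x)=\|x\|_1$, so that $f(x)=\|x\|_1$ and $\min_x f(x)=0$. Let $\gamma\ge 0$, $x^0=(\gamma/2,\,-1)^\top$ and $v_i^0=(1,1)^\top$ for all $i$. Consider the EF21 method $$x^{t+1}=x^t-\gamma v^t,\quad v^t=\frac1n\sum_{i=1}^n v_i^t,\qquad v_i^{t+1}=v_i^t+\mathcal C\big(f_i'(x^{t+1})-v_i^t\big),\quad f_i'(x^{t+1})\in\partial f_i(x^{t+1}),$$ with $\mathcal C$ the Top-$1$ compressor. Then for every $t\ge 0$, $$f(x^t)-\min_{x\in\mathbb R^2} f(x)=1+\frac{\gamma}{2}+t\gamma .$$
   Context: The Top-$1$ compressor $\mathcal C:\mathbb R^2\to\mathbb R^2$ keeps the coordinate of largest absolute value and sets the other coordinate to zero; when both coordinates have equal absolute value it keeps the first coordinate. $\partial f_i(x)$ denotes the convex subdifferential. *)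

(* Defs.v *)
From mathcomp Require Import all_boot all_order all_algebra.
Set Implicit Arguments. Unset Strict Implicit. Unset Printing Implicit Defensive.
Import Order.TTheory GRing.Theory Num.Theory.
Local Open Scope ring_scope.

Section Defs.
Variable R : realFieldType.

Definition vadd (a b : R * R) : R * R := (a.1 + b.1, a.2 + b.2).
Definition vsub (a b : R * R) : R * R := (a.1 - b.1, a.2 - b.2).
Definition vscale (c : R) (a : R * R) : R * R := (c * a.1, c * a.2).
Definition vdot (a b : R * R) : R := a.1 * b.1 + a.2 * b.2.

Definition l1norm (a : R * R) : R := `|a.1| + `|a.2|.

Definition subdiff (h : R * R -> R) (x : R * R) : R * R -> Prop :=
  fun g => forall y, h x + vdot g (vsub y x) <= h y.

(* Top-1 compressor: keep the coordinate of largest absolute value,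
   keep the first one in case of a tie *)
Definition top1 (a : R * R) : R * R :=
  if `|a.2| <= `|a.1| then (a.1, 0) else (0, a.2).

Definition vavg (n : nat) (w : 'I_n -> R * R) : R * R :=
  ((n%:R)^-1 * \sum_(i < n) (w i).1, (n%:R)^-1 * \sum_(i < n) (w i).2).
End Defs.

(* Main.v *)
Require Import Defs.
From mathcomp Require Import all_boot all_order all_algebra.
From mathcomp Require Import ring lra.
Import Order.TTheory GRing.Theory Num.Theory.
Local Open Scope ring_scope.

Lemma avg_const (R : realFieldType) (n : nat) (hn : (1 <= n)%N) (c : R) :
  (n%:R)^-1 * \sum_(i < n) c = c.
Proof.
rewrite sumr_const card_ord -[c *+ n]mulr_natl mulKf //.
by rewrite pnatr_eq0 -lt0n.
Qed.

Lemma subdiff_l1 (R : realFieldType) (x g : R * R) :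
  subdiff (@l1norm R) x g -> g.1 * x.1 = `|x.1| /\ g.2 * x.2 = `|x.2|.
Proof.
move=> H.
have H1 := H (0, x.2). have H2 := H (2 * x.1, x.2).
have H3 := H (x.1, 0). have H4 := H (x.1, 2 * x.2).
move: H1 H2 H3 H4; rewrite /l1norm /vdot /vsub /= !normr0 !normrM.
rewrite (ger0_norm (_ : (0:R) <= 2)) //.
by split; lra.
Qed.

Lemma sgn_pos (R : realFieldType) (a b : R) : 0 < b -> a * b = `|b| -> a = 1.
Proof.
move=> hb; rewrite gtr0_norm // => e.
have : (a - 1) * b = 0 by rewrite mulrBl e mul1r subrr.
by move/eqP; rewrite mulf_eq0 (gt_eqF hb) orbF subr_eq0 => /eqP.
Qed.

Lemma sgn_neg (R : realFieldType) (a b : R) : b < 0 -> a * b = `|b| -> a = -1.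
Proof.
move=> hb; rewrite ltr0_norm // => e.
have : (a + 1) * b = 0 by rewrite mulrDl e mul1r addNr.
by move/eqP; rewrite mulf_eq0 (lt_eqF hb) orbF addr_eq0 => /eqP.
Qed.

Theorem mainTheorem2 (R : realFieldType) (n : nat) (hn : (1 <= n)%N)
  (f : 'I_n -> R * R -> R) (hf : forall i, f i = @l1norm R)
  (ftot : R * R -> R)
  (hftot : forall y, ftot y = (n%:R)^-1 * \sum_(i < n) f i y)
  (fstar : R) (hmin : (forall y, fstar <= ftot y) /\ (exists y, ftot y = fstar))
  (gamma : R) (hgamma : 0 <= gamma)
  (x : nat -> R * R) (v : 'I_n -> nat -> R * R) (g : 'I_n -> nat -> R * R)
  (hx0 : x 0%N = (gamma / 2, -1))
  (hv0 : forall i, v i 0%N = (1, 1))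
  (hx : forall t, x t.+1 = vsub (x t) (vscale gamma (vavg (fun i => v i t))))
  (hg : forall i t, subdiff (f i) (x t.+1) (g i t.+1))
  (hv : forall i t, v i t.+1 = vadd (v i t) (top1 (vsub (g i t.+1) (v i t)))) :
  forall t : nat, ftot (x t) - fstar = 1 + gamma / 2 + t%:R * gamma.
Proof.
have ftotE : forall y, ftot y = l1norm y.
  by move=> y; rewrite hftot; under eq_bigr => i _ do rewrite hf; rewrite avg_const.
have fs0 : fstar = 0.
  case: hmin => h1 [y hy]; apply/eqP; rewrite eq_le; apply/andP; split.
    by have := h1 (0, 0); rewrite ftotE /l1norm /= normr0 addr0.
  by rewrite -hy ftotE /l1norm addr_ge0.
move=> t; rewrite fs0 subr0 ftotE.
case: (eqVneq gamma 0) => [g0|gne].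
  have : x t = (0, -1).
    elim: t => [|t IH]; first by rewrite hx0 g0 mul0r.
    by rewrite hx IH g0 /vsub /vscale /= !mul0r !subr0.
  by move=> ->; rewrite g0 /l1norm /= normr0 normrN normr1 !mulr0 mul0r !addr0 add0r.
have gp : 0 < gamma by rewrite lt_def gne hgamma.
suff P : x t = (if odd t then -(gamma/2) else gamma/2, -1 - t%:R * gamma) /\
    forall i, v i t = (if odd t then -1 else 1, 1).
  case: P => -> _; rewrite /l1norm /=.
  have h2 : 0 < gamma / 2 by rewrite divr_gt0.
  have h3 : -1 - t%:R * gamma < 0.
    have : 0 <= t%:R * gamma by rewrite mulr_ge0.
    lra.
  rewrite (ltr0_norm h3); case: (odd t).
    by rewrite normrN (gtr0_norm h2); lra.
  by rewrite (gtr0_norm h2); lra.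
elim: t => [|t [IHx IHv]].
  by rewrite hx0 mul0r subr0; split.
have avg : vavg (fun i => v i t) = (if odd t then -1 else 1, 1).
  rewrite /vavg; under eq_bigr => i _ do rewrite IHv.
  under [X in (_, _ * X)]eq_bigr => i _ do rewrite IHv.
  by rewrite /= !avg_const.
have xE : x t.+1 = (if odd t.+1 then -(gamma/2) else gamma/2, -1 - t.+1%:R * gamma).
  rewrite hx IHx avg /vsub /vscale /= -[t.+1]addn1 natrD; case: (odd t) => /=;
  congr (_, _); lra.
split=> // i.
have [s1 s2] : (g i t.+1).1 * (x t.+1).1 = `|(x t.+1).1| /\
               (g i t.+1).2 * (x t.+1).2 = `|(x t.+1).2|.
  by apply: subdiff_l1; rewrite -(hf i).
have h2 : 0 < gamma / 2 by rewrite divr_gt0.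
have h3 : -1 - t.+1%:R * gamma < 0.
  have : 0 <= t.+1%:R * gamma by rewrite mulr_ge0.
  lra.
rewrite xE /= in s1 s2.
have e2 := @sgn_neg _ _ _ h3 s2.
rewrite hv IHv /vadd /vsub /top1 /=.
case: (odd t) s1 => /= s1.
  have e1 := @sgn_pos _ _ _ h2 s1.
  rewrite e1 e2 opprK.
  have -> : (-1 - 1 : R) = -2 by lra.
  have -> : (1 + 1 : R) = 2 by lra.
  rewrite normrN lexx /=; congr (_, _); lra.
have e1 : (g i t.+1).1 = -1 by apply: (@sgn_neg _ _ _ _ s1); lra.
rewrite e1 e2.
have -> : (-1 - 1 : R) = -2 by lra.
rewrite normrN lexx /=; congr (_, _); lra.
Qed.
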